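(* Let $(\mathfrak{g},V,\Theta)$ be a Lie-Leibniz triple with associated graded Lie algebra $T_{\leq-1}$ and differential $\partial$. Then $m\circ\partial+\partial\circ m=0$ on $\Lambda^2(T_{\leq-1})$; that is, for every $i\geq1$, $\partial_{-i}\circ m_{-i-1}=-m_{-i}\circ\partial$ as maps $\Lambda^2(T_{\leq-1})|_{-i-2}\to T_{-i}$, where $\partial$ acts on $\Lambda^2$ as a graded derivation.
   Context: A (left) Leibniz algebra is a vector space $V$ with bilinear $\circ$ satisfying $x\circ(y\circ z)=(x\circ y)\circ z+y\circ(x\circ z)$; $\{x,y\}=\frac12(x\circ y+y\circ x)$. A Lie-Leibniz triple $(\mathfrak{g},V,\Theta)$ consists of a Lie algebra $\mathfrak{g}$, a $\mathfrak{g}$-module $V$ (action $a\cdot x$) with a Leibniz product $\circ$, and a linear map $\Theta:V\to\mathfrak{g}$ with $x\circ y=\Theta(x)\cdot y$ and $\Theta(x\circ y)=[\Theta(x),\Theta(y)]$. Associated graded Lie algebra: let $K$ be the largest $\mathfrak{g}$-submodule of $S^2(V)$ in the kernel of $x\odot y\mapsto\{x,y\}$; $F$ the free graded Lie algebra on $V[1]$ (degree $-1$), $F_{-2}\cong S^2(V)$, $\mathfrak g$ acting by derivations; $K_{-2}=K$, $K_{-i}=\sum_{j=1}^{i-2}[F_{-j},K_{-i+j}]$ ($i\geq3$); $T_{\leq-1}=F/K_\bullet$, $T_{-1}=V[1]$, with induced bracket $\llbracket\,.\,,.\,\rrbracket$ and $\mathfrak{g}$-action. Let $\mathfrak{h}=\mathrm{Im}\Theta$.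 The differential $\partial=(\partial_{-i}:T_{-i-1}\to T_{-i})_{i\geq1}$ is the unique family of $\mathfrak{h}$-equivariant linear maps with $\partial\llbracket u,v\rrbracket=2\{u,v\}$, $\partial\llbracket u,x\rrbracket=\Theta(u)\cdot x-\llbracket u,\partial x\rrbracket$, $\partial\llbracket x,y\rrbracket=\llbracket\partial x,y\rrbracket+(-1)^{|x|}\llbracket x,\partial y\rrbracket$ ($u,v\in T_{-1}$, $x,y\in T_{\leq-2}$); it is set to $0$ on $T_{-1}$ and extended to $\Lambda^2(T_{\leq-1})$ by $\partial(x\wedge y)=\partial x\wedge y+(-1)^{|x|}x\wedge\partial y$. The map $m:\Lambda^2(T_{\leq-1})\to T_{\leq-1}$ is $m(x\wedge y)=\Theta(x)\cdot y-(-1)^{|x||y|}\Theta(y)\cdot x$ with $\Theta:=0$ on $T_{\leq-2}$ (graded exterior algebra convention $x\wedge y=-(-1)^{|x||y|}y\wedge x$); $m_{-i}$ denotes its component landing in $T_{-i}$. *)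

(* Defs.v *)
From HB Require Import structures.
From mathcomp Require Import all_boot all_order all_algebra.
Set Implicit Arguments. Unset Strict Implicit. Unset Printing Implicit Defensive.
Import Order.TTheory GRing.Theory Num.Theory.
Local Open Scope ring_scope.

Definition bilinear_map (R : fieldType) (U W X : lmodType R) (f : U -> W -> X) : Prop :=
  (forall y, linear (fun x => f x y)) /\ (forall x, linear (f x)).

Definition lie_algebra (R : fieldType) (g : lmodType R) (lb : g -> g -> g) : Prop :=
  [/\ bilinear_map lb, (forall a, lb a a = 0) &
      (forall a b c, lb a (lb b c) + lb b (lb c a) + lb c (lb a b) = 0)].

Definition lie_module (R : fieldType) (g V : lmodType R) (lb : g -> g -> g)
  (act : g -> V -> V) : Prop :=
  bilinear_map act /\
  (forall a b x, act (lb a b) x = act a (act b x) - act b (act a x)).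

Definition leibniz_product (R : fieldType) (V : lmodType R) (circ : V -> V -> V) : Prop :=
  bilinear_map circ /\
  (forall x y z, circ x (circ y z) = circ (circ x y) z + circ y (circ x z)).

Definition circ_of (R : fieldType) (g V : lmodType R) (act : g -> V -> V)
  (Theta : V -> g) : V -> V -> V := fun x y => act (Theta x) y.

Definition lie_leibniz_triple (R : fieldType) (g V : lmodType R) (lb : g -> g -> g)
  (act : g -> V -> V) (Theta : V -> g) : Prop :=
  [/\ lie_algebra lb, lie_module lb act, linear Theta,
      leibniz_product (circ_of act Theta) &
      (forall x y, Theta (circ_of act Theta x y) = lb (Theta x) (Theta y))].

(* Elements of S^2(V) as formal sums  sum_k u_k (.) v_k  (seq of pairs).    *)

Definition s2act (R : fieldType) (g V : lmodType R) (act : g -> V -> V) (a : g)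
  (s : seq (V * V)) : seq (V * V) :=
  flatten [seq [:: (act a p.1, p.2); (p.1, act a p.2)] | p <- s].

(* action of a word a_1 ... a_n of U(g) *)
Definition s2word (R : fieldType) (g V : lmodType R) (act : g -> V -> V)
  (w : seq g) (s : seq (V * V)) : seq (V * V) :=
  foldr (s2act act) s w.

Definition sym_eval (R : fieldType) (V : lmodType R) (circ : V -> V -> V)
  (s : seq (V * V)) : V :=
  \sum_(p <- s) (2%:R^-1 *: (circ p.1 p.2 + circ p.2 p.1)).

(* s represents an element of K, the largest g-submodule of S^2 V contained
   in the kernel of x (.) y |-> {x,y}:  U(g).s lies in that kernel. *)
Definition inK (R : fieldType) (g V : lmodType R) (act : g -> V -> V) (Theta : V -> g)
  (s : seq (V * V)) : Prop :=
  forall w : seq g, sym_eval (circ_of act Theta) (s2word act w s) = 0.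

Definition brS2 (R : fieldType) (V L : lmodType R) (br : L -> L -> L) (phi : V -> L)
  (s : seq (V * V)) : L :=
  \sum_(p <- s) br (phi p.1) (phi p.2).

(* D n is the homogeneous component of degree -n.                          *)

Definition subspace (R : fieldType) (L : lmodType R) (D : {pred L}) : Prop :=
  0 \in D /\ (forall (c : R) x y, x \in D -> y \in D -> c *: x + y \in D).

Definition neg_graded (R : fieldType) (L : lmodType R) (D : nat -> {pred L}) : Prop :=
  [/\ (forall n, subspace (D n)),
      (forall x, x \in D 0%N -> x = 0),
      (forall x : L, exists (N : nat) (f : nat -> L),
          (forall n, f n \in D n) /\ x = \sum_(n < N) f n) &
      (forall (N : nat) (f : nat -> L), (forall n, f n \in D n) ->
          \sum_(n < N) f n = 0 -> forall n, (n < N)%N -> f n = 0)].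

Definition graded_lie (R : fieldType) (L : lmodType R) (D : nat -> {pred L})
  (br : L -> L -> L) : Prop :=
  [/\ neg_graded D, bilinear_map br,
      (forall m n x y, x \in D m -> y \in D n -> br x y \in D (m + n)%N),
      (forall m n x y, x \in D m -> y \in D n ->
          br x y = - (((-1) ^+ (m * n) : R) *: br y x)) &
      (forall m n x y z, x \in D m -> y \in D n ->
          br x (br y z) = br (br x y) z + ((-1) ^+ (m * n) : R) *: br y (br x z))].

Definition graded_lie_morph (R : fieldType) (T L : lmodType R)
  (DT : nat -> {pred T}) (DL : nat -> {pred L})
  (brT : T -> T -> T) (brL : L -> L -> L) (psi : T -> L) : Prop :=
  [/\ linear psi,
      (forall n x, x \in DT n -> psi x \in DL n) &
      (forall x y, psi (brT x y) = brL (psi x) (psi y))].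

(* T_{<=-1} = F / K_bullet, F the free graded Lie algebra on V[1],           *)
(* K_bullet the ideal generated by K in F_{-2} = S^2 V.  Characterized by   *)
(* its universal property (quotient of a free object), together with the    *)
(* (redundant but explicit) facts T_{-1} = V[1] and T generated by T_{-1}.  *)

Definition is_T_leibniz (R : fieldType) (g V : lmodType R) (act : g -> V -> V)
  (Theta : V -> g) (T : lmodType R) (DT : nat -> {pred T}) (brT : T -> T -> T)
  (iota : V -> T) : Prop :=
  graded_lie DT brT /\ linear iota /\ (forall v, iota v \in DT 1%N) /\
  (forall s, inK act Theta s -> brS2 brT iota s = 0) /\
  (forall (L : lmodType R) (DL : nat -> {pred L}) (brL : L -> L -> L),
     graded_lie DL brL ->
     forall phi : V -> L, linear phi -> (forall v, phi v \in DL 1%N) ->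
     (forall s, inK act Theta s -> brS2 brL phi s = 0) ->
     (exists psi : T -> L, graded_lie_morph DT DL brT brL psi /\
                           forall v, psi (iota v) = phi v) /\
     (forall psi1 psi2 : T -> L,
        graded_lie_morph DT DL brT brL psi1 -> graded_lie_morph DT DL brT brL psi2 ->
        (forall v, psi1 (iota v) = phi v) -> (forall v, psi2 (iota v) = phi v) ->
        forall x, psi1 x = psi2 x)) /\
  (forall y, y \in DT 1%N -> exists v, y = iota v) /\
  (forall n y, y \in DT n.+2 -> exists s : seq (V * T),
      all (fun p => p.2 \in DT n.+1) s /\ y = \sum_(p <- s) brT (iota p.1) p.2).

Definition induced_action (R : fieldType) (g V T : lmodType R) (lb : g -> g -> g)
  (act : g -> V -> V) (DT : nat -> {pred T}) (brT : T -> T -> T) (iota : V -> T)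
  (actT : g -> T -> T) : Prop :=
  [/\ bilinear_map actT,
      (forall n a x, x \in DT n -> actT a x \in DT n),
      (forall a x y, actT a (brT x y) = brT (actT a x) y + brT x (actT a y)),
      (forall a v, actT a (iota v) = iota (act a v)) &
      (forall a b x, actT (lb a b) x = actT a (actT b x) - actT b (actT a x))].

Definition theta_ext (R : fieldType) (g V T : lmodType R) (Theta : V -> g)
  (DT : nat -> {pred T}) (iota : V -> T) (ThetaT : T -> g) : Prop :=
  [/\ linear ThetaT, (forall v, ThetaT (iota v) = Theta v) &
      (forall n x, (2 <= n)%N -> x \in DT n -> ThetaT x = 0)].

Definition is_differential (R : fieldType) (g V T : lmodType R) (act : g -> V -> V)
  (Theta : V -> g) (DT : nat -> {pred T}) (brT : T -> T -> T) (iota : V -> T)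
  (actT : g -> T -> T) (dT : T -> T) : Prop :=
  linear dT /\
  (forall x, x \in DT 1%N -> dT x = 0) /\
  (forall n x, x \in DT n.+1 -> dT x \in DT n) /\
  (forall v x, dT (actT (Theta v) x) = actT (Theta v) (dT x)) /\
  (forall u v, dT (brT (iota u) (iota v))
               = iota (circ_of act Theta u v + circ_of act Theta v u)) /\
  (forall u n x, (2 <= n)%N -> x \in DT n ->
      dT (brT (iota u) x) = actT (Theta u) x - brT (iota u) (dT x)) /\
  (forall m n x y, (2 <= m)%N -> (2 <= n)%N -> x \in DT m -> y \in DT n ->
      dT (brT x y) = brT (dT x) y + ((-1) ^+ m : R) *: brT x (dT y)).

Definition mT (R : fieldType) (g T : lmodType R) (actT : g -> T -> T)
  (ThetaT : T -> g) (a b : nat) (x y : T) : T :=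
  actT (ThetaT x) y - ((-1) ^+ (a * b) : R) *: actT (ThetaT y) x.

(* Main.v *)
Require Import Defs.
From HB Require Import structures.
From mathcomp Require Import all_boot all_order all_algebra.
From mathcomp Require Import zify.
Import Order.TTheory GRing.Theory Num.Theory.
Local Open Scope ring_scope.
Set Implicit Arguments.

Section Lin.
Variables (R : fieldType) (U W : lmodType R) (f : U -> W).
Hypothesis Hf : linear f.
Lemma lin0 : f 0 = 0.
Proof.
have := Hf 1 0 0; rewrite !scale1r addr0 => E.
by apply: (addrI (f 0)); rewrite addr0 -E.
Qed.
Lemma linD x y : f (x + y) = f x + f y.
Proof. by have := Hf 1 x y; rewrite !scale1r. Qed.
Lemma linZ c x : f (c *: x) = c *: f x.
Proof. by have := Hf c x 0; rewrite !addr0 lin0 addr0. Qed.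
Lemma linN x : f (- x) = - f x.
Proof. by rewrite -scaleN1r linZ scaleN1r. Qed.
End Lin.

Theorem mainTheorem9 (R : fieldType) (g : lmodType R) (lb : g -> g -> g)
  (V : lmodType R) (act : g -> V -> V) (Theta : V -> g)
  (T : lmodType R) (DT : nat -> {pred T}) (brT : T -> T -> T) (iota : V -> T)
  (actT : g -> T -> T) (ThetaT : T -> g) (dT : T -> T) :
  [pchar R] =i pred0 ->
  lie_leibniz_triple lb act Theta ->
  is_T_leibniz act Theta DT brT iota ->
  induced_action lb act DT brT iota actT ->
  theta_ext Theta DT iota ThetaT ->
  is_differential act Theta DT brT iota actT dT ->
  forall i : nat, (1 <= i)%N ->
  forall (a b : nat) (x y : T), (1 <= a)%N -> (1 <= b)%N -> (a + b = i.+2)%N ->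
    x \in DT a -> y \in DT b ->
    dT (mT actT ThetaT a b x y)
    = - (mT actT ThetaT a.-1 b (dT x) y
         + ((-1) ^+ a : R) *: mT actT ThetaT a b.-1 x (dT y)).
Proof.
move=> _ [[Hbil Haa _] _ HTh _ Hhom] [_ [_ [_ [_ [_ [HD1 HD2]]]]]]
  [HactB _ _ _ _] [HThT HThiota HTh0] [HdL [Hd1 [HdD [Hdeq [Hduv [_ _]]]]]].
have act0l : forall z, actT 0 z = 0 by move=> z; apply: lin0 (HactB.1 z).
have act0r : forall c, actT c 0 = 0 by move=> c; apply: lin0 (HactB.2 c).
have Th0 : ThetaT 0 = 0 by apply: lin0.
have d0 : dT 0 = 0 by apply: lin0.
have anti : forall u v, lb u v + lb v u = 0.
  move=> u v; have := Haa (u + v).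
  have L1 := linD (Hbil.1 (u + v)) u v; rewrite /= in L1.
  rewrite L1 !(linD (Hbil.2 _)) !Haa add0r addr0 => E.
  move: E; rewrite addrC; exact.
have ThD : forall n z, (2 <= n)%N -> z \in DT n -> ThetaT (dT z) = 0.
  move=> [|[|[|n]]] z // _ Hz.
    have [s [Hs ->]] := HD2 0%N z Hz.
    elim: s Hs => [|p s IH] /=; first by rewrite big_nil d0.
    move=> /andP [Hp Hs]; rewrite big_cons (linD HdL) (linD HThT) IH // addr0.
    have [v ->] := HD1 _ Hp.
    by rewrite Hduv HThiota (linD HTh) !Hhom anti.
  by apply: (HTh0 n.+2) => //; apply: HdD.
move=> i i1 a b x y a1 b1 Hab Hx Hy; rewrite /mT.
case: a a1 Hab Hx => [|[|a]] // _ Hab Hx.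
  case: b b1 Hab Hy => [|[|b]] // _ Hab Hy; first by exfalso; lia.
  have [u Eu] := HD1 _ Hx; subst x.
  rewrite (Hd1 _ Hx) (HTh0 _ _ _ Hy) // act0l scaler0 subr0 Th0 !act0l scaler0 subr0 add0r (ThD _ _ _ Hy) // act0l scaler0 subr0 HThiota Hdeq.
  by rewrite expr1 scaleN1r opprK.
rewrite (HTh0 _ _ _ Hx) // !act0l.
case: b b1 Hab Hy => [|[|b]] // _ Hab Hy.
  have [w Ew] := HD1 _ Hy; subst y.
  rewrite (Hd1 _ Hy) (ThD _ _ _ Hx) // !act0l Th0 act0l !scaler0 !subr0 scaler0 addr0 !sub0r HThiota (linN HdL) (linZ HdL) Hdeq /= !muln1 [in LHS]exprS mulN1r scaleNr.
  by [].
rewrite (HTh0 _ _ _ Hy) // (ThD _ _ _ Hx) // (ThD _ _ _ Hy) // !act0l !scaler0 !subr0 scaler0 addr0 oppr0 d0.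
by [].
Qed.
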